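(* Let $m_x,m_y$ be positive integers, $\Delta\xi,\Delta\eta>0$, and let $\vec X:\mathbb R^2\to\mathbb R^2$ be a smooth map with nowhere vanishing Jacobian determinant such that $\vec X(\xi+m_x\Delta\xi,\eta)-\vec X(\xi,\eta)$ and $\vec X(\xi,\eta+m_y\Delta\eta)-\vec X(\xi,\eta)$ are constant vectors. Index pressure points by $(i,j)\in\mathbb Z_{m_x}\times\mathbb Z_{m_y}$ (indices taken modulo $m_x$, $m_y$), with weights ${\tt dVc}_{i,j}=\Delta\xi\Delta\eta\,|\det D\vec X(i\Delta\xi,j\Delta\eta)|$. Suppose that at every east face $(i,j)$, with computational location $\vec\xi^e_{i,j}=((i+\tfrac12)\Delta\xi,j\Delta\eta)$, a vector $\vec u^e_{i,j}\in\mathbb R^2$ is given, and at every north face $(i,j)$, with location $\vec\xi^n_{i,j}=(i\Delta\xi,(j+\tfrac12)\Delta\eta)$, a vector $\vec u^n_{i,j}\in\mathbb R^2$ is given. For $\varepsilon\in\{\tfrac12,\tfrac32,\dots\}$ define $$\overline{F}^e_{i,j}(\varepsilon)=-\frac{1}{\varepsilon}\Big(\vec X\big(\vec\xi^e_{i,j}+\varepsilon(0,\Delta\eta)\big)-\vec X\big(\vec\xi^e_{i,j}-\varepsilon(0,\Delta\eta)\big)\Big)^\perp\cdot\vec u^e_{i,j},$$ $$\overline{F}^n_{i,j}(\varepsilon)=\frac{1}{\varepsilon}\Big(\vec X\big(\vec\xi^n_{i,j}+\varepsilon(\Delta\xi,0)\big)-\vec X\big(\vec\xi^n_{i,j}-\varepsilon(\Delta\xi,0)\big)\Big)^\perp\cdot\vec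 u^n_{i,j},$$ where $(a,b)^\perp=(-b,a)$, and for a positive integer $K$ and real coefficients $\alpha(\tfrac12),\dots,\alpha(K-\tfrac12)$ define $$({\sf DIV})_{i,j}=\frac{1}{2\,{\tt dVc}_{i,j}}\sum_{\varepsilon\in\{1/2,\dots,K-1/2\}}\alpha(\varepsilon)\Big(\overline F^e_{i+\varepsilon-1/2,\,j}(\varepsilon)-\overline F^e_{i-\varepsilon-1/2,\,j}(\varepsilon)+\overline F^n_{i,\,j+\varepsilon-1/2}(\varepsilon)-\overline F^n_{i,\,j-\varepsilon-1/2}(\varepsilon)\Big).$$ Then (a) $\sum_{i,j}{\tt dVc}_{i,j}({\sf DIV})_{i,j}=0$ for all choices of the face vectors; and (b) if there is a constant $\vec c\in\mathbb R^2$ with $\vec u^e_{i,j}=\vec u^n_{i,j}=\vec c$ for all $(i,j)$, then $({\sf DIV})_{i,j}=0$ for all $(i,j)$.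
   Context: This is the finite-difference discrete divergence on a periodic, structured, curvilinear staggered 2D grid: the face vectors $\vec u^e,\vec u^n$ are the full velocity vectors reconstructed at the faces from staggered grid-aligned velocity components by interpolations that are exact for constant vector fields, so that for the discrete representation of a constant vector field $\vec c$ they all equal $\vec c$. Property (a) is the discrete statement that the integral of a divergence vanishes; property (b) is the statement that the discrete divergence of a constant vector field vanishes. *)

(* Defs.v *)
From mathcomp Require Import all_boot all_algebra all_classical all_reals all_analysis.
Import GRing.Theory Num.Theory.
Import numFieldNormedType.Exports.

Set Implicit Arguments. Unset Strict Implicit. Unset Printing Implicit Defensive.
Local Open Scope ring_scope.

Section Defs.
Variable R : realType.

Definition perp (v : R * R) : R * R := (- v.2, v.1).
Definition dot (u v : R * R) : R := u.1 * v.1 + u.2 * v.2.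

Fixpoint iterD (ds : seq (R * R)) (f : R * R -> R * R) : R * R -> R * R :=
  match ds with
  | [::] => f
  | v :: ds' => fun p => 'D_v (iterD ds' f) p
  end.

Definition smooth (f : R * R -> R * R) : Prop :=
  forall (ds : seq (R * R)) (p : R * R), differentiable (iterD ds f) p.

Definition jacdet (f : R * R -> R * R) (p : R * R) : R :=
  let a := 'D_((1 : R), (0 : R)) f p in
  let b := 'D_((0 : R), (1 : R)) f p in
  a.1 * b.2 - a.2 * b.1.

Definition wrap (m : nat) (k : int) : nat := `|(k %% (m : int))%Z|%N.

Definition dVc (dxi deta : R) (X : R * R -> R * R) (i j : nat) : R :=
  dxi * deta * `|jacdet X (i%:R * dxi, j%:R * deta)|.

Definition Fe (mx my : nat) (dxi deta : R) (X : R * R -> R * R)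
    (ue : nat -> nat -> R * R) (k l : int) (eps : R) : R :=
  let i := wrap mx k in let j := wrap my l in
  let p := ((i%:R + 1 / 2) * dxi, j%:R * deta) in
  - (1 / eps) *
    dot (perp (X (p.1, p.2 + eps * deta) - X (p.1, p.2 - eps * deta))) (ue i j).

Definition Fn (mx my : nat) (dxi deta : R) (X : R * R -> R * R)
    (un : nat -> nat -> R * R) (k l : int) (eps : R) : R :=
  let i := wrap mx k in let j := wrap my l in
  let p := (i%:R * dxi, (j%:R + 1 / 2) * deta) in
  (1 / eps) *
    dot (perp (X (p.1 + eps * dxi, p.2) - X (p.1 - eps * dxi, p.2))) (un i j).

(* discrete divergence; eps ranges over k + 1/2 for k < K and
   alpha k stands for alpha(k + 1/2).  With eps = k + 1/2:
   i + eps - 1/2 = i + k,  i - eps - 1/2 = i - k - 1. *)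
Definition DIV (mx my : nat) (dxi deta : R) (X : R * R -> R * R) (K : nat)
    (alpha : nat -> R) (ue un : nat -> nat -> R * R) (i j : nat) : R :=
  1 / (2 * dVc dxi deta X i j) *
  \sum_(k < K)
    let eps := k%:R + 1 / 2 in
    alpha k *
      (Fe mx my dxi deta X ue (i%:Z + k%:Z) j eps
       - Fe mx my dxi deta X ue (i%:Z - k%:Z - 1) j eps
       + Fn mx my dxi deta X un i (j%:Z + k%:Z) eps
       - Fn mx my dxi deta X un i (j%:Z - k%:Z - 1) eps).

End Defs.

(* Main.v *)
Require Import Defs.
From mathcomp Require Import all_boot all_algebra all_classical all_reals all_analysis.
From mathcomp Require Import ring.
Import GRing.Theory Num.Theory.
Import numFieldNormedType.Exports.
Local Open Scope ring_scope.

Lemma wrap_lt (m : nat) (k : int) : (0 < m)%N -> (Defs.wrap m k < m)%N.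
Proof.
move=> m0; rewrite /Defs.wrap -ltz_nat gez0_abs ?modz_ge0 ?ltz_pmod //.
by rewrite eqz_nat -lt0n.
Qed.

Lemma wrap_nat (m j : nat) : (j < m)%N -> Defs.wrap m j = j.
Proof.
move=> jm; rewrite /Defs.wrap modz_small //.
Qed.

Lemma wrapR (R : realType) (m : nat) (k : int) : (0 < m)%N ->
  ((Defs.wrap m k)%:R : R) = k%:~R + (- (k %/ m)%Z)%:~R * m%:R.
Proof.
move=> m0; rewrite /Defs.wrap natr_absz ger0_norm; last by rewrite modz_ge0 // eqz_nat -lt0n.
rewrite {2}(divz_eq k m) !intrD !intrM intrN.
rewrite -[(m%:Z)%:~R]pmulrn; ring.
Qed.

Lemma sum_wrap (R : realType) (F : nat -> R) (m : nat) (s : int) : (0 < m)%N ->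
  \sum_(i < m) F (Defs.wrap m (i%:Z + s)) = \sum_(i < m) F i.
Proof.
move=> m0.
pose h (i : 'I_m) : 'I_m := Ordinal (wrap_lt m (i%:Z + s) m0).
have hinj : injective h.
  move=> i i' /(congr1 val) /=; rewrite /Defs.wrap => /(congr1 (fun n : nat => n%:Z)).
  rewrite !gez0_abs ?modz_ge0 ?eqz_nat -?lt0n // => E.
  apply: val_inj => /=; apply/eqP; rewrite -eqz_nat; apply/eqP.
  rewrite -(@modz_small i m); last by rewrite ltz_nat ltn_ord.
  rewrite -(@modz_small i' m); last by rewrite ltz_nat ltn_ord.
  rewrite -(addrK s i) -(addrK s i') -modzDml E modzDml //.
rewrite [RHS](reindex_inj hinj) /=.
by apply: eq_bigr.
Qed.

Lemma perX (R : realType) (X : R * R -> R * R) (T : R) (a : R * R) :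
  (forall xi eta, X (xi + T, eta) - X (xi, eta) = a) ->
  forall (n : int) x y1 y2,
    X (x + n%:~R * T, y1) - X (x + n%:~R * T, y2) = X (x, y1) - X (x, y2).
Proof.
move=> HX.
have step : forall x y1 y2, X (x + T, y1) - X (x + T, y2) = X (x, y1) - X (x, y2).
  move=> x y1 y2.
  rewrite -[X (x + T, y1)](subrK (X (x, y1))) HX.
  rewrite -[X (x + T, y2)](subrK (X (x, y2))) HX.
  by rewrite opprD addrACA subrr add0r.
have nat : forall (n : nat) x y1 y2,
    X (x + n%:R * T, y1) - X (x + n%:R * T, y2) = X (x, y1) - X (x, y2).
  elim=> [|n IH] x y1 y2; first by rewrite mul0r addr0.
  by rewrite mulrSr mulrDl mul1r addrA step IH.
case=> [n|n] x y1 y2; first exact: nat.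
have := nat n.+1 (x - n.+1%:R * T) y1 y2; rewrite subrK => ->.
by rewrite NegzE intrN mulNr.
Qed.

Lemma perY (R : realType) (X : R * R -> R * R) (T : R) (a : R * R) :
  (forall xi eta, X (xi, eta + T) - X (xi, eta) = a) ->
  forall (n : int) x1 x2 y,
    X (x1, y + n%:~R * T) - X (x2, y + n%:~R * T) = X (x1, y) - X (x2, y).
Proof.
move=> HX.
have step : forall x1 x2 y, X (x1, y + T) - X (x2, y + T) = X (x1, y) - X (x2, y).
  move=> x1 x2 y.
  rewrite -[X (x1, y + T)](subrK (X (x1, y))) HX.
  rewrite -[X (x2, y + T)](subrK (X (x2, y))) HX.
  by rewrite opprD addrACA subrr add0r.
have nat : forall (n : nat) x1 x2 y,
    X (x1, y + n%:R * T) - X (x2, y + n%:R * T) = X (x1, y) - X (x2, y).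
  elim=> [|n IH] x1 x2 y; first by rewrite mul0r addr0.
  by rewrite mulrSr mulrDl mul1r addrA step IH.
case=> [n|n] x1 x2 y; first exact: nat.
have := nat n.+1 x1 x2 (y - n.+1%:R * T); rewrite subrK => ->.
by rewrite NegzE intrN mulNr.
Qed.

Lemma Fe_eq (R : realType) (mx my : nat) (dxi deta : R) (X : R * R -> R * R)
  (ue : nat -> nat -> R * R) (c a : R * R) (k : int) (j : nat) (eps x y : R) :
  (forall xi eta, X (xi + mx%:R * dxi, eta) - X (xi, eta) = a) ->
  (0 < mx)%N -> (j < my)%N ->
  (forall i j, (i < mx)%N -> (j < my)%N -> ue i j = c) ->
  x = (k%:~R + 1 / 2) * dxi -> y = j%:R * deta ->
  Fe mx my dxi deta X ue k j eps =
    - (1 / eps) * dot (perp (X (x, y + eps * deta) - X (x, y - eps * deta))) c.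
Proof.
move=> HX m0 jm Hu -> ->.
rewrite /Fe /= wrap_nat // Hu ?wrap_lt //.
rewrite wrapR // (_ : (k%:~R + (- (k %/ mx)%Z)%:~R * mx%:R + 1 / 2) * dxi =
   (k%:~R + 1 / 2) * dxi + (- (k %/ mx)%Z)%:~R * (mx%:R * dxi)); last by ring.
by rewrite (perX _ _ _ _ HX).
Qed.

Lemma Fn_eq (R : realType) (mx my : nat) (dxi deta : R) (X : R * R -> R * R)
  (un : nat -> nat -> R * R) (c b : R * R) (i : nat) (l : int) (eps x y : R) :
  (forall xi eta, X (xi, eta + my%:R * deta) - X (xi, eta) = b) ->
  (0 < my)%N -> (i < mx)%N ->
  (forall i j, (i < mx)%N -> (j < my)%N -> un i j = c) ->
  x = i%:R * dxi -> y = (l%:~R + 1 / 2) * deta ->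
  Fn mx my dxi deta X un i l eps =
    (1 / eps) * dot (perp (X (x + eps * dxi, y) - X (x - eps * dxi, y))) c.
Proof.
move=> HX m0 im Hu -> ->.
rewrite /Fn /= wrap_nat // Hu ?wrap_lt //.
rewrite wrapR // (_ : (l%:~R + (- (l %/ my)%Z)%:~R * my%:R + 1 / 2) * deta =
   (l%:~R + 1 / 2) * deta + (- (l %/ my)%Z)%:~R * (my%:R * deta)); last by ring.
by rewrite (perY _ _ _ _ HX).
Qed.

Lemma Fe_wrap (R : realType) (mx my : nat) (dxi deta : R) (X : R * R -> R * R)
  (ue : nat -> nat -> R * R) (k l : int) (eps : R) : (0 < mx)%N ->
  Fe mx my dxi deta X ue k l eps = Fe mx my dxi deta X ue (Defs.wrap mx k)%:Z l eps.
Proof. by move=> m0; rewrite /Fe wrap_nat // wrap_lt. Qed.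

Lemma Fn_wrap (R : realType) (mx my : nat) (dxi deta : R) (X : R * R -> R * R)
  (un : nat -> nat -> R * R) (k l : int) (eps : R) : (0 < my)%N ->
  Fn mx my dxi deta X un k l eps = Fn mx my dxi deta X un k (Defs.wrap my l)%:Z eps.
Proof. by move=> m0; rewrite /Fn [Defs.wrap my (Posz _)]wrap_nat // wrap_lt. Qed.

Lemma sum_Fe (R : realType) (mx my : nat) (dxi deta : R) (X : R * R -> R * R)
  (ue : nat -> nat -> R * R) (s l : int) (eps : R) : (0 < mx)%N ->
  \sum_(i < mx) Fe mx my dxi deta X ue (i%:Z + s) l eps =
  \sum_(i < mx) Fe mx my dxi deta X ue (i%:Z) l eps.
Proof.
move=> m0; rewrite -(sum_wrap _ (fun w : nat => Fe mx my dxi deta X ue w%:Z l eps) _ s m0).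
by apply: eq_bigr => i _; rewrite Fe_wrap.
Qed.

Lemma sum_Fn (R : realType) (mx my : nat) (dxi deta : R) (X : R * R -> R * R)
  (un : nat -> nat -> R * R) (s k : int) (eps : R) : (0 < my)%N ->
  \sum_(j < my) Fn mx my dxi deta X un k (j%:Z + s) eps =
  \sum_(j < my) Fn mx my dxi deta X un k (j%:Z) eps.
Proof.
move=> m0; rewrite -(sum_wrap _ (fun w : nat => Fn mx my dxi deta X un k w%:Z eps) _ s m0).
by apply: eq_bigr => i _; rewrite Fn_wrap.
Qed.

Theorem mainTheorem2 (R : realType) (mx my : nat) (dxi deta : R)
    (X : R * R -> R * R) (K : nat) (alpha : nat -> R) :
  (0 < mx)%N -> (0 < my)%N -> 0 < dxi -> 0 < deta ->
  smooth X ->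
  (forall p : R * R, jacdet X p != 0) ->
  (exists a : R * R, forall xi eta : R,
      X (xi + mx%:R * dxi, eta) - X (xi, eta) = a) ->
  (exists b : R * R, forall xi eta : R,
      X (xi, eta + my%:R * deta) - X (xi, eta) = b) ->
  (0 < K)%N ->
  (forall ue un : nat -> nat -> R * R,
      \sum_(i < mx) \sum_(j < my)
         dVc dxi deta X i j * DIV mx my dxi deta X K alpha ue un i j = 0)
  /\
  (forall (ue un : nat -> nat -> R * R) (c : R * R),
      (forall i j : nat, (i < mx)%N -> (j < my)%N -> ue i j = c /\ un i j = c) ->
      forall i j : nat, (i < mx)%N -> (j < my)%N ->
        DIV mx my dxi deta X K alpha ue un i j = 0).
Proof.
move=> mx0 my0 dxi0 deta0 _ J0 [a Ha] [b Hb] K0; split; last first.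
  move=> ue un c Hc i j im jm.
  have Hue : forall i j, (i < mx)%N -> (j < my)%N -> ue i j = c.
    by move=> i0 j0 i1 j1; case: (Hc i0 j0 i1 j1).
  have Hun : forall i j, (i < mx)%N -> (j < my)%N -> un i j = c.
    by move=> i0 j0 i1 j1; case: (Hc i0 j0 i1 j1).
  rewrite /DIV big1 ?mulr0 // => k _ /=.
  set eps := k%:R + 1 / 2.
  rewrite (Fe_eq _ _ _ _ _ _ _ _ _ _ _ _ (i%:R * dxi + eps * dxi) (j%:R * deta) Ha mx0 jm Hue); last 2 first.
  - by rewrite intrD -!pmulrn /eps; field.
  - by [].
  rewrite (Fe_eq _ _ _ _ _ _ _ _ _ _ _ _ (i%:R * dxi - eps * dxi) (j%:R * deta) Ha mx0 jm Hue); last 2 first.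
  - by rewrite !intrD !intrN -!pmulrn /eps; field.
  - by [].
  rewrite (Fn_eq _ _ _ _ _ _ _ _ _ _ _ _ (i%:R * dxi) (j%:R * deta + eps * deta) Hb my0 im Hun); last 2 first.
  - by [].
  - by rewrite intrD -!pmulrn /eps; field.
  rewrite (Fn_eq _ _ _ _ _ _ _ _ _ _ _ _ (i%:R * dxi) (j%:R * deta - eps * deta) Hb my0 im Hun); last 2 first.
  - by [].
  - by rewrite !intrD !intrN -!pmulrn /eps; field.
  case: (X (_ + _, _ + _)) => [p1 p2].
  case: (X (_ + _, _ - _)) => [q1 q2].
  case: (X (_ - _, _ + _)) => [r1 r2].
  case: (X (_ - _, _ - _)) => [s1 s2].
  rewrite /dot /perp /=.
  ring.
move=> ue un.
have dV0 : forall i j : nat, dVc dxi deta X i j != 0.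
  move=> i j; rewrite /dVc !mulf_neq0 ?normr_eq0 ?J0 //.
    by rewrite lt0r_neq0.
  by rewrite lt0r_neq0.
have H : forall i j : nat, dVc dxi deta X i j * (1 / (2 * dVc dxi deta X i j)) = 1 / 2.
  by move=> i j; field; rewrite dV0.
under eq_bigr => i _ do under eq_bigr => j _ do rewrite /DIV mulrA H.
under eq_bigr => i _ do rewrite -mulr_sumr.
rewrite -mulr_sumr; apply/eqP; rewrite mulf_eq0; apply/orP; right; apply/eqP.
under eq_bigr => i _ do rewrite exchange_big.
rewrite exchange_big /=; apply: big1 => k _.
under eq_bigr => i _ do under eq_bigr => j _ do rewrite -addrA mulrDr.
under eq_bigr => i _ do rewrite big_split.
rewrite big_split /=.
rewrite exchange_big [X in _ + X]big1 ?addr0 /=.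
  apply: big1 => j _; rewrite -mulr_sumr sumrB sum_Fe //.
  under [X in _ - X]eq_bigr => i _ do rewrite -addrA.
  by rewrite (sum_Fe _ _ _ _ _ _ _ (- k%:Z - 1)) // subrr mulr0.
move=> i _; rewrite -mulr_sumr sumrB sum_Fn //.
under [X in _ - X]eq_bigr => j _ do rewrite -addrA.
by rewrite (sum_Fn _ _ _ _ _ _ _ (- k%:Z - 1)) // subrr mulr0.
Qed.
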